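(* For every formula with placeholders $\varphi$ and all formulas $\psi_1,\psi_2$: $\mathbf{GF}\,\varphi[\psi_1\mathbf{W}\psi_2] \equiv \mathbf{GF}\,\varphi[\psi_1\mathbf{U}\psi_2] \vee (\mathbf{FG}\psi_1 \wedge \mathbf{GF}\,\varphi[\mathbf{true}])$ and $\mathbf{FG}\,\varphi[\psi_1\mathbf{U}\psi_2] \equiv (\mathbf{GF}\psi_2 \wedge \mathbf{FG}\,\varphi[\psi_1\mathbf{W}\psi_2]) \vee \mathbf{FG}\,\varphi[\mathbf{false}]$.
   Context: Fix a finite set $Ap$ of atomic propositions. A word is an infinite sequence $w = w[0]w[1]\dots$ of letters of $2^{Ap}$, and $w_i$ denotes the suffix $w[i]w[i+1]\dots$. Formulas are generated by $\varphi ::= \mathbf{true} \mid \mathbf{false} \mid a \mid \neg a \mid \varphi\wedge\varphi \mid \varphi\vee\varphi \mid \mathbf{X}\varphi \mid \varphi\,\mathbf{U}\,\varphi \mid \varphi\,\mathbf{W}\,\varphi \mid \mathbf{GF}\varphi \mid \mathbf{FG}\varphi$ ($a\in Ap$), where $\mathbf{GF}$, $\mathbf{FG}$ are single unary operators. Semantics: $w\models a$ iff $a\in w[0]$, $w\models\neg a$ iff $a\notin w[0]$, Boolean constants and connectives as usual; $w\models\mathbf{X}\varphi$ iff $w_1\models\varphi$; $w\models\varphi\mathbf{U}\psi$ iff $\exists k$: $w_k\models\psi$ and $\forall j<k$: $w_j\models\varphi$; $w\models\varphi\mathbf{W}\psi$ iff ($\forall k$: $w_k\models\varphi$) or $w\models\varphi\mathbf{U}\psi$;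 $w\models\mathbf{GF}\varphi$ iff $w_k\models\varphi$ for infinitely many $k$; $w\models\mathbf{FG}\varphi$ iff $\exists n\,\forall k\geq n$: $w_k\models\varphi$. $\varphi\equiv\psi$ means both formulas are satisfied by exactly the same words. A formula with placeholders is a formula over $Ap\cup\{\star\}$, where $\star$ is a special fresh atomic proposition, with at least one occurrence of $\star$ and no occurrence of $\neg\star$; for such $\varphi$ and a formula $\psi$, $\varphi[\psi]$ denotes the result of substituting $\psi$ for every occurrence of $\star$; substitution binds more strongly than any operator, so $\mathbf{GF}\,\varphi[\psi]$ means $\mathbf{GF}(\varphi[\psi])$. *)

(* Defs.v *)
From mathcomp Require Import all_boot.
Set Implicit Arguments. Unset Strict Implicit. Unset Printing Implicit Defensive.

Inductive formula (A : Type) : Type :=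
| FTrue | FFalse
| FAtom of A
| FNAtom of A
| FAnd of formula A & formula A
| FOr of formula A & formula A
| FX of formula A
| FU of formula A & formula A
| FW of formula A & formula A
| FGF of formula A
| FFG of formula A.
Arguments FTrue {A}. Arguments FFalse {A}.

Definition word (A : finType) := nat -> {set A}.
Definition suffix (A : finType) (w : word A) (i : nat) : word A := fun k => w (i + k).

Fixpoint sat (A : finType) (w : word A) (f : formula A) : Prop :=
  match f with
  | FTrue => True
  | FFalse => False
  | FAtom a => a \in w 0
  | FNAtom a => a \notin w 0
  | FAnd f g => sat w f /\ sat w g
  | FOr f g => sat w f \/ sat w g
  | FX f => sat (suffix w 1) f
  | FU f g => exists k, sat (suffix w k) g /\ forall j, j < k -> sat (suffix w j) f
  | FW f g => (forall k, sat (suffix w k) f) \/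
              (exists k, sat (suffix w k) g /\ forall j, j < k -> sat (suffix w j) f)
  | FGF f => forall n, exists k, n <= k /\ sat (suffix w k) f
  | FFG f => exists n, forall k, n <= k -> sat (suffix w k) f
  end.

Definition ltl_equiv (A : finType) (f g : formula A) : Prop :=
  forall w : word A, sat w f <-> sat w g.

(* Formulas with placeholders: formulas over Ap ∪ {⋆}, encoded as option A,
   with ⋆ = None. *)
Fixpoint has_star (A : Type) (f : formula (option A)) : bool :=
  match f with
  | FTrue | FFalse => false
  | FAtom None => true
  | FAtom (Some _) => false
  | FNAtom _ => false
  | FAnd f g | FOr f g | FU f g | FW f g => has_star f || has_star g
  | FX f | FGF f | FFG f => has_star f
  end.

Fixpoint no_neg_star (A : Type) (f : formula (option A)) : bool :=
  match f with
  | FTrue | FFalse | FAtom _ => true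
  | FNAtom None => false
  | FNAtom (Some _) => true
  | FAnd f g | FOr f g | FU f g | FW f g => no_neg_star f && no_neg_star g
  | FX f | FGF f | FFG f => no_neg_star f
  end.

Definition placeholder_formula (A : Type) (f : formula (option A)) : Prop :=
  has_star f /\ no_neg_star f.

Fixpoint subst (A : Type) (f : formula (option A)) (psi : formula A) : formula A :=
  match f with
  | FTrue => FTrue
  | FFalse => FFalse
  | FAtom None => psi
  | FAtom (Some a) => FAtom a
  | FNAtom None => FFalse (* unreachable for placeholder formulas *)
  | FNAtom (Some a) => FNAtom a
  | FAnd f g => FAnd (subst f psi) (subst g psi)
  | FOr f g => FOr (subst f psi) (subst g psi)
  | FX f => FX (subst f psi)
  | FU f g => FU (subst f psi) (subst g psi)
  | FW f g => FW (subst f psi) (subst g psi)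
  | FGF f => FGF (subst f psi)
  | FFG f => FFG (subst f psi)
  end.

(* Main.v *)
From Stdlib Require Import Setoid Morphisms Classical FunctionalExtensionality.
From mathcomp Require Import all_boot.
From mathcomp Require Import zify.
Require Import Defs.

Section Aux.
Variable A : finType.

Fixpoint sem (w : word A) (S : nat -> Prop) (f : formula (option A)) (i : nat) : Prop :=
  match f with
  | FTrue => True
  | FFalse => False
  | FAtom None => S i
  | FAtom (Some a) => a \in w i
  | FNAtom None => False
  | FNAtom (Some a) => a \notin w i
  | FAnd f g => sem w S f i /\ sem w S g i
  | FOr f g => sem w S f i \/ sem w S g i
  | FX f => sem w S f (i + 1)
  | FU f g => exists k, sem w S g (i + k) /\ forall j, j < k -> sem w S f (i + j)
  | FW f g => (forall k, sem w S f (i + k)) \/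
              (exists k, sem w S g (i + k) /\ forall j, j < k -> sem w S f (i + j))
  | FGF f => forall n, exists k, n <= k /\ sem w S f (i + k)
  | FFG f => exists n, forall k, n <= k -> sem w S f (i + k)
  end.

Lemma suffix_suffix (w : word A) i k : suffix (suffix w i) k = suffix w (i + k).
Proof. apply: functional_extensionality => n; by rewrite /suffix addnA. Qed.

Lemma sat_sem (w : word A) psi f i :
  sat (suffix w i) (subst f psi) <-> sem w (fun j => sat (suffix w j) psi) f i.
Proof.
elim: f i => [|| [a|] | [a|] | f IHf g IHg | f IHf g IHg | f IHf | f IHf g IHg
  | f IHf g IHg | f IHf | f IHf] i /=; try done;
  try (by rewrite /suffix addn0);
  try setoid_rewrite suffix_suffix;
  try setoid_rewrite IHf; try setoid_rewrite IHg; done.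
Qed.

Lemma sem_local (w : word A) (S T : nat -> Prop) f i :
  (forall j, i <= j -> (S j <-> T j)) -> (sem w S f i <-> sem w T f i).
Proof.
elim: f i => [|| [a|] | [a|] | f IHf g IHg | f IHf g IHg | f IHf | f IHf g IHg
  | f IHf g IHg | f IHf | f IHf] i H /=; try done.
- by apply: H.
- by rewrite (IHf i H) (IHg i H).
- by rewrite (IHf i H) (IHg i H).
- apply: IHf => j hj; apply: H; lia.
- have Hf: forall k, sem w S f (i+k) <-> sem w T f (i+k).
    by move=> k; apply: IHf => j hj; apply: H; lia.
  have Hg: forall k, sem w S g (i+k) <-> sem w T g (i+k).
    by move=> k; apply: IHg => j hj; apply: H; lia.
  by setoid_rewrite Hf; setoid_rewrite Hg.
- have Hf: forall k, sem w S f (i+k) <-> sem w T f (i+k).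
    by move=> k; apply: IHf => j hj; apply: H; lia.
  have Hg: forall k, sem w S g (i+k) <-> sem w T g (i+k).
    by move=> k; apply: IHg => j hj; apply: H; lia.
  by setoid_rewrite Hf; setoid_rewrite Hg.
- have Hf: forall k, sem w S f (i+k) <-> sem w T f (i+k).
    by move=> k; apply: IHf => j hj; apply: H; lia.
  by setoid_rewrite Hf.
- have Hf: forall k, sem w S f (i+k) <-> sem w T f (i+k).
    by move=> k; apply: IHf => j hj; apply: H; lia.
  by setoid_rewrite Hf.
Qed.

Lemma sem_mono (w : word A) (S T : nat -> Prop) f i :
  (forall j, S j -> T j) -> no_neg_star f -> sem w S f i -> sem w T f i.
Proof.
move=> H.
elim: f i => [|| [a|] | [a|] | f IHf g IHg | f IHf g IHg | f IHf | f IHf g IHg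
  | f IHf g IHg | f IHf | f IHf] i /= Hn; try done.
- exact: H.
- move/andP: Hn => [h1 h2] [a b]; split; [exact: IHf | exact: IHg].
- move/andP: Hn => [h1 h2] [a|b]; [left; exact: IHf | right; exact: IHg].
- exact: IHf.
- move/andP: Hn => [h1 h2] [k [a b]]; exists k; split; first exact: IHg.
  by move=> j hj; apply: IHf => //; apply: b.
- move/andP: Hn => [h1 h2] [a|[k [a b]]].
    by left => k; apply: IHf.
  right; exists k; split; first exact: IHg.
  by move=> j hj; apply: IHf => //; apply: b.
- by move=> a n; case: (a n) => k [h1 h2]; exists k; split => //; apply: IHf.
- by case=> n a; exists n => k hk; apply: IHf => //; apply: a.
Qed.

End Aux.
Arguments sem_mono {A w S T f i}.
Arguments sem_local {A w S T f i}.

Theorem lemma3 (Ap : finType) (phi : formula (option Ap)) (psi1 psi2 : formula Ap) :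
  placeholder_formula phi ->
  ltl_equiv (FGF (subst phi (FW psi1 psi2)))
        (FOr (FGF (subst phi (FU psi1 psi2)))
             (FAnd (FFG psi1) (FGF (subst phi FTrue))))
  /\
  ltl_equiv (FFG (subst phi (FU psi1 psi2)))
        (FOr (FAnd (FGF psi2) (FFG (subst phi (FW psi1 psi2))))
             (FFG (subst phi FFalse))).
Proof.
move=> [_ Hn].
have hUW: forall w j, sat (suffix w j) (FU psi1 psi2) -> sat (suffix w j) (FW psi1 psi2).
  by move=> w j h; right.
split => w /=; setoid_rewrite sat_sem.
- split.
  + move=> H.
    case: (classic (exists n, forall k, n <= k -> sat (suffix w k) psi1)) => [h1|h1].
      right; split => // n; case: (H n) => k [hk hs]; exists k; split => //.
      by apply: (sem_mono _ Hn hs) => j.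
    left => n; case: (H n) => k [hk hs]; exists k; split => //.
    apply: (sem_mono _ Hn hs) => j /= [hj|] //.
    exfalso; apply: h1; exists j => k' hk'.
    have := hj (k' - j); rewrite suffix_suffix subnKC //.
  + case=> [H | [[n Hn1] H]] m.
      case: (H m) => k [hk hs]; exists k; split => //.
      by apply: (sem_mono _ Hn hs) => j; apply: hUW.
    case: (H (maxn m n)) => k [hk hs]; exists k; split; first lia.
    apply: (proj1 (sem_local _) hs) => j hj /=; split => // _.
    left => l; rewrite suffix_suffix; apply: Hn1; lia.
- split.
  + case=> n H.
    case: (classic (exists n, forall k, n <= k -> ~ sat (suffix w k) psi2)) => [[m hm]|h2].
      right; exists (maxn n m) => k hk.
      have hk' : n <= k by lia.
      apply: (proj1 (sem_local _) (H k hk')).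
      move=> j hj /=; split => // -[l [hl _]].
      move: hl; rewrite suffix_suffix; apply: hm; lia.
    left; split.
      move=> m; apply: NNPP => hn; apply: h2; exists m => k hk hs; apply: hn; by exists k.
    exists n => k hk; apply: (sem_mono _ Hn (H k hk)) => j; exact: hUW.
  + case=> [[H2 [n H]] | [n H]]; exists n => k hk.
      apply: (sem_mono _ Hn (H k hk)) => j /= [hj|] //.
      case: (H2 j) => m [hm hs]; exists (m - j); rewrite suffix_suffix subnKC //.
    by apply: (sem_mono _ Hn (H k hk)) => j.
Qed.
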